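(* Let $G$ be a graph, $B\subseteq V(G)$ and $\ell\ge 1$. Then $B$ is a mixed $\ell$-leaky forcing set of $G$ if and only if $B$ is an $(\ell-1)$-leaky forcing set of $G$ such that for every set $L\subseteq V(G)$ of $\ell-1$ vertex leaks and every $v\in V(G)\setminus B$ there exist forces $x\to v$ and $y\to v$ in $\mathcal{F}_L(B)$ with $x\ne y$.
   Context: All graphs are finite, simple and undirected. Zero forcing: a blue vertex $u$ with exactly one white neighbor $w$ may force $w$ (color it blue), written $u\to w$. From an initial blue set $B$, a forcing sequence is a chronologically ordered list of forces each valid when performed. A vertex leak is a vertex not allowed to perform any force; $B$ is an $\ell$-leaky forcing set if for every set of at most $\ell$ vertex leaks, exhaustively applying the forcing rule from $B$ colors all of $V(G)$ blue. For $L\subseteq V(G)$, $\mathcal{F}_L(B)$ is the set of all forces $x\to v$ occurring in some forcing sequence from $B$ in which no vertex of $L$ performs a force. An edge leak is an edge $xy$ across which no force may be performed (neither $x\to y$ nor $y\to x$). A specified leak is an ordered pair $x\to y$ meaning $x$ may not force $y$. A leak is any of these three kinds. $B$ is a mixed $\ell$-leaky forcing set if for every set of at most $\ell$ leaks (of any mix of kinds), exhaustively applying the forcing rule from $B$ subject to the leaks colors all of $V(G)$ blue. *)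

(* Defs.v *)
From mathcomp Require Import all_boot.
Set Implicit Arguments. Unset Strict Implicit. Unset Printing Implicit Defensive.

Section ZF.
Variables (T : finType) (e : rel T).

(* A restriction on forces: [ok x w] says x is permitted to force w. *)
Definition valid_force (ok : T -> T -> bool) (S : {set T}) (x w : T) : bool :=
  [&& ok x w, x \in S, w \notin S, e x w &
      [forall y, (e x y && (y \notin S)) ==> (y == w)]].

Fixpoint valid_seq (ok : T -> T -> bool) (S : {set T}) (s : seq (T * T)) : bool :=
  match s with
  | [::] => true
  | (x, w) :: s' => valid_force ok S x w && valid_seq ok (w |: S) s'
  end.

Definition final_set (S : {set T}) (s : seq (T * T)) : {set T} :=
  S :|: [set w | w in map snd s].

Definition exhaustive (ok : T -> T -> bool) (S : {set T}) (s : seq (T * T)) : Prop :=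
  valid_seq ok S s /\ forall x w, ~~ valid_force ok (final_set S s) x w.

Definition forces_all (ok : T -> T -> bool) (B : {set T}) : Prop :=
  forall s, exhaustive ok B s -> final_set B s = setT.

Definition vleak_ok (L : {set T}) (x w : T) : bool := x \notin L.

Definition leaky_forcing_set (l : nat) (B : {set T}) : Prop :=
  forall L : {set T}, #|L| <= l -> forces_all (vleak_ok L) B.

Definition forces_set (L : {set T}) (B : {set T}) (x v : T) : Prop :=
  exists s, valid_seq (vleak_ok L) B s /\ (x, v) \in s.

Inductive leak : Type :=
  | VertexLeak of T
  | EdgeLeak of T & T      (* edge xy: neither x -> y nor y -> x *)
  | SpecLeak of T & T.     (* ordered pair: x may not force y *)

Definition leak_wf (l : leak) : bool :=
  match l with
  | VertexLeak _ => true
  | EdgeLeak x y => e x y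
  | SpecLeak x y => e x y
  end.

Definition leak_blocks (l : leak) (x w : T) : bool :=
  match l with
  | VertexLeak z => x == z
  | EdgeLeak a b => ((x == a) && (w == b)) || ((x == b) && (w == a))
  | SpecLeak a b => (x == a) && (w == b)
  end.

Definition mixed_ok (ls : seq leak) (x w : T) : bool :=
  ~~ has (fun l => leak_blocks l x w) ls.

Definition mixed_leaky_forcing_set (l : nat) (B : {set T}) : Prop :=
  forall ls : seq leak, size ls <= l -> all leak_wf ls ->
    forces_all (mixed_ok ls) B.

End ZF.

(* Main.v *)
Require Import Defs.
From mathcomp Require Import all_boot zify.
From Stdlib Require Import Classical.
Set Implicit Arguments. Unset Strict Implicit. Unset Printing Implicit Defensive.

Section Aux.
Variables (T : finType) (e : rel T).
Implicit Types (ok : T -> T -> bool) (S W L : {set T}) (s : seq (T * T)) (x w v : T).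

Lemma mem_final S s v : (v \in final_set S s) = (v \in S) || (v \in map snd s).
Proof.
rewrite /final_set inE; congr (_ || _).
by apply/imsetP/idP => [[w Hw ->]|H]; [|exists v].
Qed.


Lemma final_cons' S x w s : final_set S ((x, w) :: s) = final_set (w |: S) s.
Proof.
apply/setP => v; rewrite !mem_final /= inE.
by rewrite !inE; case: (v == w); rewrite ?orbT.
Qed.

Lemma final_nil S : final_set S [::] = S.
Proof. by apply/setP => v; rewrite mem_final orbF. Qed.

Lemma sub_final S s : S \subset final_set S s.
Proof. by apply/subsetP => v Hv; rewrite mem_final Hv. Qed.

Lemma vf_ext (ok1 ok2 : T -> T -> bool) S x w : ok1 =2 ok2 -> valid_force e ok1 S x w = valid_force e ok2 S x w.
Proof. by move=> H; rewrite /valid_force H. Qed.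

Lemma vs_ext (ok1 ok2 : T -> T -> bool) S s : ok1 =2 ok2 -> valid_seq e ok1 S s = valid_seq e ok2 S s.
Proof.
move=> H; elim: s S => [//|[x w] s IH] S /=.
by rewrite (vf_ext _ _ _ H) IH.
Qed.

Lemma fa_ext (ok1 ok2 : T -> T -> bool) (B : {set T}) : ok1 =2 ok2 -> forces_all e ok1 B -> forces_all e ok2 B.
Proof.
move=> H Hf s [Hv Hn]; apply: Hf; split; first by rewrite (vs_ext _ _ H).
by move=> x w; rewrite (vf_ext _ _ _ H).
Qed.

Lemma vs_mono (ok1 ok2 : T -> T -> bool) S s : (forall x w, ok1 x w -> ok2 x w) ->
  valid_seq e ok1 S s -> valid_seq e ok2 S s.
Proof.
move=> H; elim: s S => [//|[x w] s IH] S /= /andP[Hf Hs].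
rewrite IH // andbT; move: Hf; rewrite /valid_force => /andP[Ho ->].
by rewrite H.
Qed.

Lemma vs_mem ok S s x w : valid_seq e ok S s -> (x, w) \in s ->
  [/\ ok x w, e x w & w \notin S].
Proof.
elim: s S => [//|[a b] s IH] S /= /andP[Hf Hs]; rewrite in_cons => /orP[/eqP [-> ->]|Hin].
  by case/and5P: Hf.
have [H1 H2] := IH _ Hs Hin; rewrite inE negb_or => /andP[_ H3]; by [].
Qed.

Lemma exh_ex ok : forall n S, #|~: S| <= n -> exists s, exhaustive e ok S s.
Proof.
elim=> [|n IH] S Hn.
  exists [::]; split=> // x w; rewrite final_nil /valid_force.
  have: ~: S = set0 by apply/eqP; rewrite -cards_eq0 -leqn0.
  move/setP/(_ w); rewrite !inE => ->; by rewrite !andbF.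
case: (pickP (fun p : T * T => valid_force e ok S p.1 p.2)) => [[x w] /= Hf|H0].
  have Hw : w \notin S by case/and5P: Hf.
  have : #|~: (w |: S)| <= n.
    rewrite -ltnS; apply: leq_trans Hn; apply: proper_card.
    apply/properP; split.
      by apply/subsetP => y; rewrite !inE negb_or => /andP[].
    by exists w; rewrite !inE ?eqxx.
  case/IH => s [Hs Hn'].
  by exists ((x, w) :: s); split; [rewrite /= Hf | move=> a b; rewrite final_cons'].
exists [::]; split=> // x w; rewrite final_nil; exact: (negbT (H0 (x, w))).
Qed.

Definition stalled ok W := forall x w, ~~ valid_force e ok W x w.

Lemma step_out ok S W x w : S \subset W -> valid_force e ok S x w -> w \notin W ->
  valid_force e ok W x w.
Proof.
move=> /subsetP SW /and5P[H1 H2 H3 H4 /forallP H5] HwW.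
rewrite /valid_force H1 (SW _ H2) HwW H4 /=; apply/forallP => y.
apply/implyP => /andP[Hy1 Hy2]; have := H5 y; rewrite Hy1 /=.
have -> // : y \notin S by apply: contra Hy2; exact: SW.
Qed.

Lemma stay ok W S s : stalled ok W -> S \subset W -> valid_seq e ok S s ->
  final_set S s \subset W.
Proof.
move=> HW; elim: s S => [|[x w] s IH] S SW /=; first by rewrite final_nil.
case/andP=> Hf Hs; rewrite final_cons'; apply: IH Hs.
case: (boolP (w \in W)) => Hw; first by rewrite subUset sub1set Hw.
by have := HW x w; rewrite (step_out SW Hf Hw).
Qed.

Lemma core L z W S a b : stalled (vleak_ok L) W -> S \subset W ->
  valid_force e (vleak_ok (L :\ z)) S a b -> b \notin W ->
  [/\ a = z, e z b & forall y, e z y -> y \notin W -> y = b].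
Proof.
move=> HW SW Hf Hb; have Hf' := step_out SW Hf Hb.
case: (boolP (a \in L)) => Ha; last first.
  have := HW a b; rewrite /valid_force /vleak_ok Ha /=.
  by move: Hf'; rewrite /valid_force => /andP[_ ->].
case/and5P: Hf' => Ho _ _ He /forallP Hu.
move: Ho; rewrite /vleak_ok !inE Ha andbT negbK => /eqP Ea; subst a.
split=> // y Hy1 Hy2; have := Hu y; rewrite Hy1 Hy2 /=; by move/eqP.
Qed.

Lemma esc1 L z W S s x v : stalled (vleak_ok L) W -> S \subset W ->
  valid_seq e (vleak_ok (L :\ z)) S s -> (x, v) \in s -> v \notin W ->
  exists v0, [/\ v0 \notin W, e z v0 & forall y, e z y -> y \notin W -> y = v0].
Proof.
move=> HW; elim: s S => [//|[a b] s IH] S SW /= /andP[Hf Hs].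
case: (boolP (b \in W)) => Hb.
  rewrite in_cons => /orP[/eqP [_ ->]|Hin] Hv; first by rewrite Hb in Hv.
  by apply: (IH (b |: S)) => //; rewrite subUset sub1set Hb.
by have [_ H1 H2] := core HW SW Hf Hb => _ _; exists b.
Qed.

Lemma esc2 L z W S s x v0 : stalled (vleak_ok L) W -> S \subset W ->
  v0 \notin W -> (forall y, e z y -> y \notin W -> y = v0) ->
  valid_seq e (vleak_ok (L :\ z)) S s -> (x, v0) \in s -> x = z.
Proof.
move=> HW SW Hv0 Hu Hs Hin.
elim: s S SW Hs Hin => [//|[a b] s IH] S SW /= /andP[Hf Hs].
case: (boolP (b \in W)) => Hb.
  rewrite in_cons => /orP[/eqP [_ Eb]|Hin]; first by subst b; rewrite Hb in Hv0.
  by apply: (IH (b |: S)) => //; rewrite subUset sub1set Hb.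
have [Ea Hzb Hub] := core HW SW Hf Hb; subst a.
have Eb := Hu _ Hzb Hb; subst b.
rewrite in_cons => /orP[/eqP Hp|Hin]; first by case: Hp.
by have [_ _] := vs_mem Hs Hin; rewrite !inE eqxx.
Qed.
End Aux.

Definition xof (T : finType) (W : {set T}) (l : leak T) : T :=
  match l with
  | VertexLeak z => z
  | SpecLeak a _ => a
  | EdgeLeak a b => if a \in W then a else b
  end.

Lemma leak_x (T : finType) (W : {set T}) l x w :
  leak_blocks l x w -> x \in W -> w \notin W -> x = xof W l.
Proof.
case: l => [z|a b|a b] /=.
- by move/eqP.
- case/orP=> /andP[/eqP -> /eqP ->] Hx Hw; first by rewrite Hx.
  by rewrite (negbTE Hw).
- by case/andP=> /eqP ->.
Qed.

Lemma mixed_vert (T : finType) (L : {set T}) :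
  mixed_ok (map (@VertexLeak T) (enum L)) =2 vleak_ok L.
Proof.
move=> x w; rewrite /mixed_ok /vleak_ok has_map; congr (~~ _).
apply/hasP/idP => [[z]|Hx]; first by rewrite mem_enum /= => Hz /eqP ->.
by exists x; rewrite ?mem_enum /=.
Qed.

Lemma has_xof (T : finType) (W : {set T}) ls x w :
  has (fun l => leak_blocks l x w) ls -> x \in W -> w \notin W ->
  x \in map (xof W) ls.
Proof.
elim: ls => [//|lk ls IH] /= /orP[Hb|Hh] Hx Hw; rewrite in_cons.
  by rewrite -(leak_x Hb Hx Hw) eqxx.
by rewrite IH ?orbT.
Qed.

Theorem theorem4p2 (T : finType) (e : rel T)
    (e_sym : symmetric e) (e_irr : irreflexive e)
    (B : {set T}) (l : nat) (hl : 1 <= l) :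
  mixed_leaky_forcing_set e l B <->
  (leaky_forcing_set e (l - 1) B /\
   forall L : {set T}, #|L| = l - 1 ->
     forall v, v \notin B ->
       exists x y, x != y /\ forces_set e L B x v /\ forces_set e L B y v).
Proof.
split.
  move=> Hm.
  have Hlk : leaky_forcing_set e (l-1) B.
    move=> L HL; apply: (fa_ext (mixed_vert L)); apply: Hm.
      by rewrite size_map -cardE; lia.
    by rewrite all_map; apply/allP.
  split=> // L HL v Hv.
  have [s0 Hs0] := exh_ex e (vleak_ok L) (leqnn #|~: B|).
  have Hfin := Hlk L (eq_leq HL) s0 Hs0.
  have : v \in final_set B s0 by rewrite Hfin inE.
  rewrite mem_final (negbTE Hv) /= => /mapP[[x v'] Hin /= Ev]; subst v'.
  have Fx : forces_set e L B x v by exists s0; split => //; case: Hs0.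
  case: (classic (exists y, y != x /\ forces_set e L B y v)).
    by case=> y [Hy Fy]; exists x, y; split => //; rewrite eq_sym.
  move=> Hno; exfalso.
  have [Hxv Hexv _] := vs_mem (proj1 Hs0) Hin.
  pose ls := SpecLeak x v :: map (@VertexLeak T) (enum L).
  have Hfa : forces_all e (mixed_ok ls) B.
    apply: Hm; first by rewrite /= size_map -cardE HL; lia.
    by rewrite /= Hexv /= all_map; apply/allP.
  have [s2 Hs2] := exh_ex e (mixed_ok ls) (leqnn #|~: B|).
  have Hfin2 := Hfa s2 Hs2.
  have : v \in final_set B s2 by rewrite Hfin2 inE.
  rewrite mem_final (negbTE Hv) /= => /mapP[[y v'] Hin2 /= Ev]; subst v'.
  have [Hok _ _] := vs_mem (proj1 Hs2) Hin2.
  have Fy : forces_set e L B y v.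
    exists s2; split=> //; apply: vs_mono (proj1 Hs2) => a b.
    have := mixed_vert L a b; rewrite /mixed_ok => <- /=.
    by rewrite negb_or => /andP[].
  case: (eqVneq y x) => [Eyx|Nyx].
    by subst y; move: Hok; rewrite /mixed_ok /= !eqxx.
  by apply: Hno; exists y.
case=> Hlk H2 ls Hsz _ s [Hs Hst].
set W := final_set B s.
have HBW : B \subset W := sub_final B s.
set L := [set x | x \in map (xof W) ls].
have HL : #|L| <= l.
  rewrite cardsE; apply: leq_trans (card_size _) _; by rewrite size_map.
have Hstall : stalled e (vleak_ok L) W.
  move=> x w; apply/negP => Hf; have := Hst x w.
  case/and5P: Hf => Ho Hx Hw He Hu.
  suff Hm : mixed_ok ls x w by rewrite /valid_force Hm Hx Hw He Hu.
  apply/negP => Hb; move: Ho.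
  by rewrite /vleak_ok inE (has_xof Hb Hx Hw).
case: (pickP (fun v => v \notin W)) => [v HvW|H0]; last first.
  by apply/setP => u; rewrite in_setT; move: (H0 u) => /= /negbFE.
exfalso.
have HvB : v \notin B by apply: contra HvW; apply: (subsetP HBW).
case: (leqP #|L| (l-1)) => HLl.
  have [s1 Hs1] := exh_ex e (vleak_ok L) (leqnn #|~: B|).
  have Hf1 := Hlk L HLl s1 Hs1.
  have := stay Hstall HBW (proj1 Hs1); rewrite Hf1 => /subsetP/(_ v).
  by rewrite inE (negbTE HvW) => /(_ isT).
have HLe : #|L| = l by lia.
have [z Hz] : exists z, z \in L.
  case: (pickP (mem L)) => [z Hz|H0]; first by exists z.
  by move: HLe; rewrite (eq_card0 H0); lia.
have HL' : #|L :\ z| = l - 1 by have := cardsD1 z L; rewrite Hz HLe; lia.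
have [s2 Hs2] := exh_ex e (vleak_ok (L :\ z)) (leqnn #|~: B|).
have Hf2 := Hlk (L :\ z) (eq_leq HL') s2 Hs2.
have : v \in final_set B s2 by rewrite Hf2 inE.
rewrite mem_final (negbTE HvB) /= => /mapP[[x v'] Hin /= Ev]; subst v'.
have [v0 [Hv0W Hzv0 Hu]] := esc1 Hstall HBW (proj1 Hs2) Hin HvW.
have Hv0B : v0 \notin B by apply: contra Hv0W; apply: (subsetP HBW).
have [x1 [y1 [Hne [[t1 [Ht1 Hi1]] [t2 [Ht2 Hi2]]]]]] := H2 _ HL' v0 Hv0B.
have E1 := esc2 Hstall HBW Hv0W Hu Ht1 Hi1.
have E2 := esc2 Hstall HBW Hv0W Hu Ht2 Hi2.
by rewrite E1 E2 eqxx in Hne.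
Qed.
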